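(* Let $F=(f_1,\dots,f_s)\in K[\mathbf{X}]^s$, $I=\langle F\rangle$, $\mathbf{r}\in\mathbb{Q}^n$ and $\le_m$ a monomial order. Let $(h_1,\dots,h_k)$ be a finite Gröbner basis of the ideal $\langle F^h\rangle_{(\mathbf{r},0)}\subseteq K\{\mathbf{X},t;(\mathbf{r},0)\}$ with respect to $<_{(\mathbf{r},0),m}$, consisting of homogeneous polynomials belonging to $\langle F^h\rangle$. Then $(h_{1,*},\dots,h_{k,*})$ is an $\mathbf{r}$-local Gröbner basis of $I$ with respect to $<_{\mathbf{r},m}$.
   Context: $K$ is a field complete for a discrete valuation $\mathrm{val}$. For $\mathbf{r}\in\mathbb{Q}^n$, $K\{\mathbf{X};\mathbf{r}\}$ is the Tate algebra of series $\sum a_\alpha\mathbf{X}^\alpha$ with $\mathrm{val}(a_\alpha)-\mathbf{r}\cdot\alpha\to+\infty$; $\mathrm{val}_{\mathbf{r}}(a\mathbf{X}^\alpha)=\mathrm{val}(a)-\mathbf{r}\cdot\alpha$. The order $<_{\mathbf{r},m}$ on terms: $a\mathbf{X}^\alpha<_{\mathbf{r},m}b\mathbf{X}^\beta$ iff $\mathrm{val}_{\mathbf{r}}(a\mathbf{X}^\alpha)>\mathrm{val}_{\mathbf{r}}(b\mathbf{X}^\beta)$, or equal and $\mathbf{X}^\alpha<_m\mathbf{X}^\beta$; $\mathrm{LT}$ denotes the maximal term. For an ideal $J$ of a polynomial ring, $J_{\mathbf{r}}$ is the ideal it generates in the Tate algebra. A Gröbner basis of an ideal $J$ of a Tate algebra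 is a subset $G\subseteq J$ such that each nonzero element of $J$ has leading term divisible by the leading term of some element of $G$; an $\mathbf{r}$-local Gröbner basis of a polynomial ideal $I$ is a Gröbner basis of $I_{\mathbf{r}}$ consisting of polynomials of $I$. Homogenization: for $f\in K[\mathbf{X}]$, $f^*=t^{\deg f}f(\mathbf{X}/t)\in K[\mathbf{X},t]$; dehomogenization: $h_*=h(\mathbf{X},1)$. $F^h=(f_1^*,\dots,f_s^* )$ and $\langle F^h\rangle$ is the ideal of $K[\mathbf{X},t]$ it generates. $K\{\mathbf{X},t;(\mathbf{r},0)\}$ is the Tate algebra in $n+1$ variables with log-radius $0$ for $t$, and $\mathrm{val}_{(\mathbf{r},0)}(a\mathbf{X}^\alpha t^u)=\mathrm{val}_{\mathbf{r}}(a\mathbf{X}^\alpha)$. The order $<_{(\mathbf{r},0),m}$: $a\mathbf{X}^\alpha t^u<b\mathbf{X}^\beta t^v$ iff $\mathrm{val}_{\mathbf{r}}(a\mathbf{X}^\alpha)>\mathrm{val}_{\mathbf{r}}(b\mathbf{X}^\beta)$; or these are equal and $|\alpha|+u<|\beta|+v$; or both are equal and $\mathbf{X}^\alpha<_m\mathbf{X}^\beta$. *)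

(* Defs.v *)
From HB Require Import structures.
From mathcomp Require Import all_boot all_order all_algebra.
From mathcomp Require Import mpoly.
Set Implicit Arguments. Unset Strict Implicit. Unset Printing Implicit Defensive.
Import Order.TTheory GRing.Theory Num.Theory.
Local Open Scope ring_scope.

(** * Complete discretely valued fields.
    The valuation is [v : K -> int]; the value at [0] (which is +oo on paper)
    is irrelevant: every axiom only uses [v] at nonzero elements. *)
Definition is_discrete_valuation (K : fieldType) (v : K -> int) : Prop :=
  [/\ (forall x y : K, x != 0 -> y != 0 -> v (x * y) = v x + v y),
      (forall x y : K, x != 0 -> y != 0 -> x + y != 0 ->
           Num.min (v x) (v y) <= v (x + y)) &
      (exists x : K, x != 0 /\ v x != 0)].

(** "val (x - y) >= M" with the convention val 0 = +oo *)
Definition vclose (K : fieldType) (v : K -> int) (x y : K) (M : int) : Prop :=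
  x = y \/ M <= v (x - y).

Definition is_complete_dvf (K : fieldType) (v : K -> int) : Prop :=
  is_discrete_valuation v /\
  forall u : nat -> K,
    (forall M : int, exists N, forall p q, (N <= p)%N -> (N <= q)%N ->
        vclose v (u p) (u q) M) ->
    exists l : K, forall M : int, exists N, forall p, (N <= p)%N -> vclose v (u p) l M.

Definition monomial_order (n : nat) (le : rel 'X_{1..n}) : Prop :=
  (forall a, le a a) /\
  [/\ (forall a b, le a b -> le b a -> a = b),
      (forall a b c, le a b -> le b c -> le a c),
      (forall a b, le a b \/ le b a),
      (forall a, le 0%MM a) &
      (forall a b c, le a b -> le (a + c)%MM (b + c)%MM)].

Definition series (K : fieldType) (n : nat) := 'X_{1..n} -> K.

Definition ser_of (K : fieldType) (n : nat) (p : {mpoly K[n]}) : series K n :=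
  fun a => p@_a.

Definition valr (K : fieldType) (v : K -> int) (n : nat) (r : 'I_n -> rat)
    (c : K) (a : 'X_{1..n}) : rat :=
  (v c)%:~R - \sum_(i < n) r i * (a i)%:R.

(** f is in K{X; r}: val(a_alpha) - r.alpha -> +oo *)
Definition in_tate (K : fieldType) (v : K -> int) (n : nat) (r : 'I_n -> rat)
    (f : series K n) : Prop :=
  forall M : rat, exists S : seq 'X_{1..n},
    forall a, f a != 0 -> a \notin S -> M < valr v r (f a) a.

Definition mul_ser_poly (K : fieldType) (n : nat) (f : series K n)
    (p : {mpoly K[n]}) : series K n :=
  fun a => \sum_(b <- msupp p | lem b a) p@_b * f (a - b)%MM.

Definition poly_ideal (K : fieldType) (n s : nat) (F : 'I_s -> {mpoly K[n]})
    (p : {mpoly K[n]}) : Prop :=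
  exists q : 'I_s -> {mpoly K[n]}, p = \sum_(i < s) q i * F i.

Definition tate_ideal (K : fieldType) (v : K -> int) (n : nat) (r : 'I_n -> rat)
    (J : {mpoly K[n]} -> Prop) (g : series K n) : Prop :=
  exists (k : nat) (c : 'I_k -> series K n) (p : 'I_k -> {mpoly K[n]}),
    [/\ forall i, in_tate v r (c i), forall i, J (p i) &
        g = fun a => \sum_(i < k) mul_ser_poly (c i) (p i) a].

(** * Term orders and leading terms.  A term order is given by its strict
    comparison [tlt c a d b] meaning c X^a < d X^b (c, d nonzero). *)
Definition term_rel (K : fieldType) (n : nat) := K -> 'X_{1..n} -> K -> 'X_{1..n} -> Prop.

Definition tlt_rm (K : fieldType) (v : K -> int) (n : nat) (r : 'I_n -> rat)
    (le : rel 'X_{1..n}) : term_rel K n :=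
  fun c a d b =>
    valr v r d b < valr v r c a \/
    (valr v r c a = valr v r d b /\ le a b /\ a <> b).

Definition mproj (n : nat) (a : 'X_{1..n.+1}) : 'X_{1..n} :=
  [multinom a (lift ord_max i) | i < n].

Definition r0 (n : nat) (r : 'I_n -> rat) : 'I_n.+1 -> rat :=
  fun i => oapp r 0 (unlift ord_max i).

Definition tlt_r0m (K : fieldType) (v : K -> int) (n : nat) (r : 'I_n -> rat)
    (le : rel 'X_{1..n}) : term_rel K n.+1 :=
  fun c a d b =>
    valr v (r0 r) d b < valr v (r0 r) c a \/
    (valr v (r0 r) c a = valr v (r0 r) d b /\ (mdeg a < mdeg b)%N) \/
    (valr v (r0 r) c a = valr v (r0 r) d b /\ mdeg a = mdeg b /\
       le (mproj a) (mproj b) /\ mproj a <> mproj b).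

Definition is_LM (K : fieldType) (n : nat) (tlt : term_rel K n) (f : series K n)
    (a : 'X_{1..n}) : Prop :=
  f a != 0 /\ forall b, f b != 0 -> b <> a -> tlt (f b) b (f a) a.

(** Groebner basis (family G) of an ideal J of a Tate algebra;
    divisibility of terms c X^b | d X^a over a field is lem b a. *)
Definition tate_GB (K : fieldType) (n : nat) (tlt : term_rel K n)
    (J : series K n -> Prop) (k : nat) (G : 'I_k -> series K n) : Prop :=
  (forall i, J (G i)) /\
  forall f, J f -> f <> (fun _ => 0) ->
    exists i a b, [/\ is_LM tlt f a, is_LM tlt (G i) b & lem b a].

Definition r_local_GB (K : fieldType) (v : K -> int) (n : nat) (r : 'I_n -> rat)
    (le : rel 'X_{1..n}) (I : {mpoly K[n]} -> Prop) (k : nat)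
    (G : 'I_k -> {mpoly K[n]}) : Prop :=
  (forall i, I (G i)) /\
  tate_GB (tlt_rm v r le) (tate_ideal v r I) (fun i => ser_of (G i)).

(** * Homogenization and dehomogenization (t is the last variable). *)
Definition hmon (n : nat) (a : 'X_{1..n}) (u : nat) : 'X_{1..n.+1} :=
  [multinom oapp (fun j => a j) u (unlift ord_max i) | i < n.+1].

Definition homogenize (K : fieldType) (n : nat) (f : {mpoly K[n]}) : {mpoly K[n.+1]} :=
  \sum_(a <- msupp f) f@_a *: 'X_[hmon a ((msize f).-1 - mdeg a)].

Definition dehomogenize (K : fieldType) (n : nat) (h : {mpoly K[n.+1]}) : {mpoly K[n]} :=
  h \mPo [tuple oapp (fun j => 'X_j) 1 (unlift ord_max i) | i < n.+1].

(* Main.v *)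
Require Import Defs.
From HB Require Import structures.
From mathcomp Require Import all_boot all_order all_algebra.
From mathcomp Require Import mpoly.
From Stdlib Require Import FunctionalExtensionality Classical.
From mathcomp Require Import zify ring lra.
Import Order.TTheory GRing.Theory Num.Theory.
Local Open Scope ring_scope.

Section Val.
Variables (K : fieldType) (v : K -> int).
Hypothesis Hdv : is_discrete_valuation v.

Lemma vM x y : x != 0 -> y != 0 -> v (x * y) = v x + v y.
Proof. by case: Hdv => H _ _; apply: H. Qed.

Lemma vD x y : x != 0 -> y != 0 -> x + y != 0 -> Num.min (v x) (v y) <= v (x + y).
Proof. by case: Hdv => _ H _; apply: H. Qed.

Lemma v1 : v 1 = 0.
Proof.
have o : (1 : K) != 0 := oner_neq0 _.
have := vM _ _ o o; rewrite mulr1; lia.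
Qed.

Lemma vN x : v (- x) = v x.
Proof.
have hN : v (-1) = 0.
  have n1 : (-1 : K) != 0 by rewrite oppr_eq0 oner_neq0.
  have := vM _ _ n1 n1; rewrite mulrNN mulr1 v1 => /eqP.
  lia.
have [->|x0] := eqVneq x 0; first by rewrite oppr0.
by rewrite -mulN1r (vM (-1) x) ?oppr_eq0 ?oner_neq0 // hN add0r.
Qed.

Lemma vD_strict x y : x != 0 -> (y = 0 \/ v x < v y) -> x + y != 0 /\ v (x + y) = v x.
Proof.
move=> x0 hy; have [->|y0] := eqVneq y 0; first by rewrite addr0.
have {}hy : v x < v y by case: hy => // /eqP; rewrite (negPf y0).
have xy0 : x + y != 0.
  apply/eqP => /eqP; rewrite addr_eq0 => /eqP yx.
  by move: hy; rewrite yx vN ltxx.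
split => //.
apply/eqP; rewrite eq_le; apply/andP; split; last first.
  have := vD _ _ x0 y0 xy0; rewrite ge_min; case/orP => // h; exact: le_trans (ltW hy) h.
have := vD (x + y) (- y) xy0; rewrite oppr_eq0 addrK => /(_ y0 x0).
rewrite ge_min vN; case/orP => // h; by move: (lt_le_trans hy h); rewrite ltxx.
Qed.

Lemma vsum (L : int) (I : Type) (s : seq I) (P : pred I) (F : I -> K) :
  (forall i, P i -> F i = 0 \/ L < v (F i)) ->
  \sum_(i <- s | P i) F i = 0 \/ L < v (\sum_(i <- s | P i) F i).
Proof.
move=> H; apply: (big_ind (fun x => x = 0 \/ L < v x)); [by left| |exact H].
move=> x y [->|hx]; first by rewrite add0r.
case=> [->|hy]; first by rewrite addr0; right.
have [x0|x0] := eqVneq x 0; first by rewrite x0 add0r; right.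
have [y0|y0] := eqVneq y 0; first by rewrite y0 addr0; right.
have [xy0|xy0] := eqVneq (x + y) 0; first by left.
right; apply: (lt_le_trans _ (vD _ _ x0 y0 xy0)).
by rewrite lt_min hx hy.
Qed.
End Val.

Lemma vsumR (K : fieldType) (v : K -> int) (Hdv : is_discrete_valuation v)
  (L : rat) (I : Type) (s : seq I) (P : pred I) (F : I -> K) :
  (forall i, P i -> F i = 0 \/ L < (v (F i))%:~R) ->
  \sum_(i <- s | P i) F i = 0 \/ L < (v (\sum_(i <- s | P i) F i))%:~R.
Proof.
move=> H; apply: (big_ind (fun x => x = 0 \/ L < (v x)%:~R)); [by left| |exact H].
move=> x y [->|hx]; first by rewrite add0r.
case=> [->|hy]; first by rewrite addr0; right.
have [x0|x0] := eqVneq x 0; first by rewrite x0 add0r; right.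
have [y0|y0] := eqVneq y 0; first by rewrite y0 addr0; right.
have [xy0|xy0] := eqVneq (x + y) 0; first by left.
right; have := vD K v Hdv _ _ x0 y0 xy0; rewrite ge_min; case/orP => h.
  by apply: lt_le_trans hx _; rewrite ler_int.
by apply: lt_le_trans hy _; rewrite ler_int.
Qed.

Section Ord.
Variables (K : fieldType) (v : K -> int) (n : nat) (r : 'I_n -> rat)
  (le : rel 'X_{1..n}).
Hypothesis Hle : monomial_order le.

Local Notation tlt := (tlt_rm v r le).

Lemma tlt_irr c a : ~ tlt c a c a.
Proof. by case=> [|[_ [_ //]]]; rewrite ltxx. Qed.

Lemma tlt_trans c1 a1 c2 a2 c3 a3 : tlt c1 a1 c2 a2 -> tlt c2 a2 c3 a3 -> tlt c1 a1 c3 a3.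
Proof.
case: Hle => _ [asym tr _ _ _].
case=> [h1|[e1 [l1 n1]]] [h2|[e2 [l2 n2]]].
- by left; exact: lt_trans h2 h1.
- by left; rewrite -e2.
- by left; rewrite e1.
- right; split; first by rewrite e1.
  split; first exact: tr l1 l2.
  by move=> e; subst a3; apply: n2; apply: asym.
Qed.

Lemma tlt_total c1 a1 c2 a2 : a1 <> a2 -> tlt c1 a1 c2 a2 \/ tlt c2 a2 c1 a1.
Proof.
case: Hle => _ [asym tr tot _ _] ne.
case: (ltgtP (valr v r c1 a1) (valr v r c2 a2)) => h.
- by right; left.
- by left; left.
- case: (tot a1 a2) => hl; [left|right]; right; do ! split => //.
  by move=> e; apply: ne.
Qed.

Lemma tlt_val c1 a1 c2 a2 c1' c2' : v c1 = v c1' -> v c2 = v c2' ->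
  tlt c1 a1 c2 a2 -> tlt c1' a1 c2' a2.
Proof. by rewrite /tlt_rm /valr => -> ->. Qed.

Lemma tlt_valr_le c1 a1 c2 a2 : tlt c1 a1 c2 a2 -> valr v r c2 a2 <= valr v r c1 a1.
Proof. by case=> [/ltW //|[-> _]]. Qed.

Lemma seq_max (f : 'X_{1..n} -> K) (s : seq 'X_{1..n}) x0 : x0 \in s ->
  exists2 m, m \in s & forall b, b \in s -> b <> m -> tlt (f b) b (f m) m.
Proof.
elim: s x0 => // x s IH _ _.
have [s0|] := eqVneq s [::].
  exists x; first exact: mem_head.
  by move=> b; rewrite s0 inE => /eqP -> h; case: (h erefl).
case: s IH => [//|y s'] IH _.
have [m ms hm] := IH y (mem_head _ _).
have [xm|xm] := eqVneq x m.
  exists m; first by rewrite inE ms orbT.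
  move=> b; rewrite inE; case/orP => [/eqP -> //|]; exact: hm.
case: (tlt_total (f x) x (f m) m (elimN eqP xm)) => h.
  exists m; first by rewrite inE ms orbT.
  move=> b; rewrite inE; case/orP => [/eqP -> //|]; exact: hm.
exists x; first exact: mem_head.
move=> b; rewrite inE; case/orP => [/eqP -> //|bs bx].
have [bm|bm] := eqVneq b m; first by rewrite bm.
exact: tlt_trans (hm b bs (elimN eqP bm)) h.
Qed.

End Ord.

Section Poly.
Variables (K : fieldType) (n : nat).
Implicit Types (T P : {mpoly K[n]}).

Lemma mcoeffMX' T (b a : 'X_{1..n}) :
  (T * 'X_[b])@_a = if lem b a then T@_(a - b) else 0.
Proof.
case: ifP => h.
  by rewrite -{1}(submK h) addmC mcoeffMX.
apply/eqP; rewrite mcoeff_eq0; apply/negP => ain.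
rewrite (perm_mem (msuppMX T b)) in ain.
by case/mapP: ain => m' _ e; move: h; rewrite e lem_addr.
Qed.

Lemma mcoeffM_ser T P a :
  (T * P)@_a = \sum_(b <- msupp P | lem b a) P@_b * T@_(a - b).
Proof.
rewrite {1}(mpolyE P) mulr_sumr raddf_sum /= [in RHS]big_mkcond /=.
apply: eq_bigr => b _.
by rewrite -scalerAr mcoeffZ mcoeffMX'; case: ifP; rewrite ?mulr0.
Qed.

Lemma mul_ser_polyE T P : mul_ser_poly (ser_of T) P = ser_of (T * P).
Proof. by apply: functional_extensionality => a; rewrite /ser_of mcoeffM_ser. Qed.

Lemma mul_ser_polyD (c1 c2 : series K n) P a :
  mul_ser_poly (fun x => c1 x + c2 x) P a = mul_ser_poly c1 P a + mul_ser_poly c2 P a.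
Proof. by rewrite /mul_ser_poly -big_split /=; apply: eq_bigr => b _; rewrite mulrDr. Qed.

Lemma mul_ser_poly1 P : mul_ser_poly (ser_of 1) P = ser_of P.
Proof. by rewrite mul_ser_polyE mul1r. Qed.

Lemma coef_sum_eq T A : \sum_(B <- msupp T) T@_B * (B == A)%:R = T@_A.
Proof.
rewrite [in RHS](mpolyE T) raddf_sum /=; apply: eq_bigr => B _.
by rewrite mcoeffZ mcoeffX.
Qed.

Variables (s : nat) (F : 'I_s -> {mpoly K[n]}).

Lemma pi0 : poly_ideal F 0.
Proof. by exists (fun _ => 0); rewrite big1 // => i _; rewrite mul0r. Qed.

Lemma piD p q : poly_ideal F p -> poly_ideal F q -> poly_ideal F (p + q).
Proof.
move=> [a ->] [b ->]; exists (fun i => a i + b i).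
by rewrite -big_split /=; apply: eq_bigr => i _; rewrite mulrDl.
Qed.

Lemma piM c p : poly_ideal F p -> poly_ideal F (c * p).
Proof.
move=> [a ->]; exists (fun i => c * a i).
by rewrite mulr_sumr; apply: eq_bigr => i _; rewrite mulrA.
Qed.

Lemma piF j : poly_ideal F (F j).
Proof.
exists (fun i => (i == j)%:R); rewrite (bigD1 j) //= eqxx mul1r big1 ?addr0 //.
by move=> i /negPf ->; rewrite mul0r.
Qed.

Lemma pi_sum (I : Type) (rr : seq I) (Pr : pred I) (G : I -> {mpoly K[n]}) :
  (forall i, Pr i -> poly_ideal F (G i)) -> poly_ideal F (\sum_(i <- rr | Pr i) G i).
Proof. by move=> H; apply: big_ind => //; [exact: pi0| exact: piD]. Qed.

End Poly.

Lemma in_tate_ser (K : fieldType) (v : K -> int) (n : nat) (r : 'I_n -> rat) (T : {mpoly K[n]}) :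
  in_tate v r (ser_of T).
Proof.
move=> M; exists (msupp T) => a; rewrite /ser_of => h.
by rewrite mcoeff_msupp h.
Qed.

Lemma big_lift (R : Type) (idx : R) (op : Monoid.law idx) (n : nat) (G : 'I_n.+1 -> R) :
  \big[op/idx]_(i < n.+1) G i = op (\big[op/idx]_(j < n) G (lift ord_max j)) (G ord_max).
Proof.
rewrite big_ord_recr; congr (op _ _); apply: eq_bigr => j _; congr G.
by apply: val_inj; rewrite /= /bump leqNgt ltn_ord.
Qed.

Section Hom.
Variable (n : nat).

Lemma hmon_lift (a : 'X_{1..n}) u j : hmon a u (lift ord_max j) = a j.
Proof. by rewrite /hmon mnmE liftK. Qed.

Lemma hmon_max (a : 'X_{1..n}) u : hmon a u ord_max = u.
Proof. by rewrite /hmon mnmE unlift_none. Qed.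

Lemma mproj_hmon (a : 'X_{1..n}) u : mproj (hmon a u) = a.
Proof. by apply/mnmP => j; rewrite /mproj mnmE hmon_lift. Qed.

Lemma hmon_mproj (B : 'X_{1..n.+1}) : B = hmon (mproj B) (B ord_max).
Proof.
apply/mnmP => i; rewrite /hmon mnmE.
by case: unliftP => [j ->|->] //=; rewrite /mproj mnmE.
Qed.

Lemma mdeg_hmon (a : 'X_{1..n}) u : mdeg (hmon a u) = (mdeg a + u)%N.
Proof.
rewrite !mdegE big_lift hmon_max; congr (_ + _)%N.
by apply: eq_bigr => j _; rewrite hmon_lift.
Qed.

Lemma mdeg_split (B : 'X_{1..n.+1}) : mdeg B = (mdeg (mproj B) + B ord_max)%N.
Proof. by rewrite {1}(hmon_mproj B) mdeg_hmon. Qed.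

Lemma valr_r0 (K : fieldType) (v : K -> int) (r : 'I_n -> rat) c (B : 'X_{1..n.+1}) :
  valr v (r0 r) c B = valr v r c (mproj B).
Proof.
rewrite /valr big_lift /r0 unlift_none /= mul0r addr0; congr (_ - _).
by apply: eq_bigr => j _; rewrite liftK /= /mproj mnmE.
Qed.

Lemma lem_mproj (A B : 'X_{1..n.+1}) : lem B A -> lem (mproj B) (mproj A).
Proof.
move/mnm_lepP => h; apply/mnm_lepP => j; rewrite /mproj !mnmE; exact: h.
Qed.

Variable K : fieldType.

Lemma dehom_X (B : 'X_{1..n.+1}) : dehomogenize ('X_[B] : {mpoly K[n.+1]}) = 'X_[mproj B].
Proof.
rewrite /dehomogenize comp_mpolyX big_lift tnth_mktuple unlift_none /= expr1n mulr1.
rewrite [RHS]mpolyXE_id; apply: eq_bigr => j _.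
by rewrite tnth_mktuple liftK /= /mproj mnmE.
Qed.

Lemma dehomE (h : {mpoly K[n.+1]}) :
  dehomogenize h = \sum_(B <- msupp h) h@_B *: 'X_[mproj B].
Proof.
rewrite /dehomogenize comp_mpolyEX; apply: eq_bigr => B _.
by rewrite -dehom_X.
Qed.

Lemma homog_supp (h : {mpoly K[n.+1]}) d B : h \is d.-homog -> B \in msupp h ->
  mdeg B = d /\ B = hmon (mproj B) (d - mdeg (mproj B)).
Proof.
move=> hh Bs; have dB : mdeg B = d := dhomog_mf hh Bs; split => //.
rewrite {1}(hmon_mproj B); congr hmon.
by rewrite -dB mdeg_split addKn.
Qed.

Lemma dehom_coef (h : {mpoly K[n.+1]}) d a : h \is d.-homog ->
  (dehomogenize h)@_a = h@_(hmon a (d - mdeg a)).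
Proof.
move=> hh; rewrite dehomE raddf_sum /= -coef_sum_eq.
apply: eq_big_seq => B Bs; rewrite mcoeffZ mcoeffX; congr (_ * (nat_of_bool _)%:R).
have [_ eB] := homog_supp h d B hh Bs.
apply/eqP/eqP => [<-|->]; last by rewrite mproj_hmon.
exact: eB.
Qed.

Definition homd d (q : {mpoly K[n]}) : {mpoly K[n.+1]} :=
  \sum_(a <- msupp q) q@_a *: 'X_[hmon a (d - mdeg a)].

Lemma homogenizeE (f : {mpoly K[n]}) : homogenize f = homd (msize f).-1 f.
Proof. by []. Qed.

Lemma hom_homog d q : (msize q <= d.+1)%N -> homd d q \is d.-homog.
Proof.
move=> hq; rewrite /homd big_seq; apply: rpred_sum => a aq; apply: rpredZ.
rewrite dhomogX; apply/eqP; change (mdeg (hmon a (d - mdeg a)) = d); rewrite mdeg_hmon subnKC //.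
by have := msize_mdeg_lt aq; move/leq_trans => /(_ _ hq).
Qed.

Lemma dehomM (p q : {mpoly K[n.+1]}) : dehomogenize (p * q) = dehomogenize p * dehomogenize q.
Proof. by rewrite /dehomogenize rmorphM. Qed.

Lemma dehom_sum (I : Type) (rr : seq I) (G : I -> {mpoly K[n.+1]}) :
  dehomogenize (\sum_(i <- rr) G i) = \sum_(i <- rr) dehomogenize (G i).
Proof. by rewrite /dehomogenize raddf_sum. Qed.

Lemma dehom_hom d q : dehomogenize (homd d q) = q.
Proof.
rewrite /homd dehom_sum [RHS]mpolyE; apply: eq_bigr => a _.
by rewrite /dehomogenize comp_mpolyZ -/(dehomogenize _) dehom_X mproj_hmon.
Qed.

End Hom.

Lemma lbound (T : eqType) (s : seq T) (g : T -> rat) : exists L, forall x, x \in s -> L <= g x.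
Proof.
elim: s => [|x s [L HL]]; first by exists 0.
exists (Num.min (g x) L) => y; rewrite inE; case/orP => [/eqP ->|ys].
  by rewrite ge_min lexx.
by rewrite ge_min HL ?orbT.
Qed.

Section Approx.
Variables (K : fieldType) (v : K -> int) (n : nat) (r : 'I_n -> rat).
Hypothesis Hdv : is_discrete_valuation v.

Lemma rsum_split (a b : 'X_{1..n}) : lem b a ->
  \sum_(i < n) r i * (a i)%:R = \sum_(i < n) r i * (b i)%:R + \sum_(i < n) r i * ((a - b)%MM i)%:R.
Proof.
move/mnm_lepP => h; rewrite -big_split /=; apply: eq_bigr => i _.
rewrite mnmE natrB ?h //; ring.
Qed.

Lemma valr_lt M x a : (M < valr v r x a) <-> (M + \sum_(i < n) r i * (a i)%:R < (v x)%:~R).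
Proof. rewrite /valr; split => h; lra. Qed.

Lemma approx1 (c : series K n) (P : {mpoly K[n]}) (M : rat) : in_tate v r c ->
  exists TE : {mpoly K[n]} * series K n,
    (forall a, c a = TE.1@_a + TE.2 a) /\
    forall a, mul_ser_poly TE.2 P a = 0 \/ M < valr v r (mul_ser_poly TE.2 P a) a.
Proof.
move=> hc.
have [L HL] := lbound _ (msupp P) (fun b => valr v r P@_b b).
have [S HS] := hc (M - L).
pose T : {mpoly K[n]} := \sum_(x <- undup S) c x *: 'X_[x].
pose e : series K n := fun a => if a \in S then 0 else c a.
exists (T, e); split => [a|a] /=.
  rewrite /T /e raddf_sum /=.
  case: ifP => aS.
    have aU : a \in undup S by rewrite mem_undup.
    rewrite addr0 (bigD1_seq a aU (undup_uniq S)) /= mcoeffZ mcoeffX eqxx mulr1.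
    rewrite big1 ?addr0 // => x /negPf xa; by rewrite mcoeffZ mcoeffX xa mulr0.
  rewrite big1_seq ?add0r // => x /andP [_]; rewrite mem_undup => xS.
  rewrite mcoeffZ mcoeffX; case: eqP => [xa|]; last by rewrite mulr0.
  by move: aS; rewrite -xa xS.
rewrite /mul_ser_poly big_seq_cond; rewrite -> valr_lt.
apply: (vsumR K v Hdv) => b /= /andP [bP hb].
rewrite /e /=; case: ifP => [_|abS]; first by left; rewrite mulr0.
have [c0|c0] := eqVneq (c (a - b)%MM) 0; first by left; rewrite c0 mulr0.
right.
have Pb0 : P@_b != 0 by rewrite -mcoeff_msupp.
have h1 := HL b bP.
have h2 := HS _ c0 (negbT abS).
rewrite (vM K v Hdv) // intrD (rsum_split _ _ hb).
move: h1 h2; rewrite /valr /=; lra.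
Qed.

Lemma approx (s : nat) (F : 'I_s -> {mpoly K[n]}) (kk : nat) (c : 'I_kk -> series K n)
  (P : 'I_kk -> {mpoly K[n]}) (M : rat) :
  (forall i, in_tate v r (c i)) -> (forall i, poly_ideal F (P i)) ->
  exists (p : {mpoly K[n]}) (E : series K n), poly_ideal F p /\
    forall a, \sum_(i < kk) mul_ser_poly (c i) (P i) a = p@_a + E a /\
      (E a = 0 \/ M < valr v r (E a) a).
Proof.
move=> hc hP.
have H : forall i : 'I_kk, exists te : {mpoly K[n]} * series K n,
    (forall a, c i a = te.1@_a + te.2 a) /\
    forall a, mul_ser_poly te.2 (P i) a = 0 \/ M < valr v r (mul_ser_poly te.2 (P i) a) a.
  by move=> i; apply: approx1.
have [TE HTE] := fin_all_exists H.
exists (\sum_i (TE i).1 * P i), (fun a => \sum_i mul_ser_poly (TE i).2 (P i) a).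
split.
  by apply: pi_sum => i _; apply: piM.
move=> a; split.
  rewrite raddf_sum -big_split; apply: eq_bigr => i _ /=.
  have ce : c i = fun x => ser_of (TE i).1 x + (TE i).2 x.
    by apply: functional_extensionality => x; exact: (proj1 (HTE i) x).
  by rewrite ce mul_ser_polyD mul_ser_polyE.
rewrite -> valr_lt.
apply: (vsumR K v Hdv) => i _.
by case: (proj2 (HTE i) a) => [->|h]; [left|right; rewrite -valr_lt].
Qed.

End Approx.

Lemma tlt_conv (K : fieldType) (v : K -> int) (n : nat) (r : 'I_n -> rat) (le : rel 'X_{1..n})
  c1 (B1 : 'X_{1..n.+1}) c2 B2 : mdeg B1 = mdeg B2 ->
  tlt_r0m v r le c1 B1 c2 B2 -> tlt_rm v r le c1 (mproj B1) c2 (mproj B2).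
Proof.
move=> e; rewrite /tlt_r0m /tlt_rm !valr_r0.
case=> [h|[[_ hd]|[h [_ hl]]]]; [by left| |by right].
by move: hd; rewrite e ltnn.
Qed.

Theorem mainTheorem6 (K : fieldType) (v : K -> int) (Hv : is_complete_dvf v)
    (n s : nat) (F : 'I_s -> {mpoly K[n]}) (r : 'I_n -> rat)
    (le : rel 'X_{1..n}) (Hle : monomial_order le)
    (k : nat) (h : 'I_k -> {mpoly K[n.+1]}) :
  (forall i, poly_ideal (fun j => homogenize (F j)) (h i)) ->
  (forall i, exists d, h i \is d.-homog) ->
  tate_GB (tlt_r0m v r le)
    (tate_ideal v (r0 r) (poly_ideal (fun j => homogenize (F j))))
    (fun i => ser_of (h i)) ->
  r_local_GB v r le (poly_ideal F) (fun i => dehomogenize (h i)).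
Proof.
move=> Hmem Hhom [HGB1 HGB2].
case: Hv => Hdv _.
have HI : forall i, poly_ideal F (dehomogenize (h i)).
  move=> i; have [Q ->] := Hmem i; rewrite dehom_sum.
  exists (fun j => dehomogenize (Q j)); apply: eq_bigr => j _.
  by rewrite dehomM homogenizeE dehom_hom.
split => //; split.
  move=> i; exists 1%N, (fun _ => ser_of 1), (fun _ => dehomogenize (h i)); split => //.
    by move=> _; apply: in_tate_ser.
  apply: functional_extensionality => a.
  by rewrite big_ord1 mul_ser_poly1.
move=> f [kk [c [P [hc hP hf]]]] fnz.
have [a1 fa1] : exists a1, f a1 != 0.
  case: (classic (exists a1, f a1 != 0)) => [//|Hn].
  exfalso; apply: fnz; apply: functional_extensionality => a.
  by case: (eqVneq (f a) 0) => // fa; case: Hn; exists a.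
pose M := valr v r (f a1) a1.
have [p [E [pI hpE]]] := approx K v n r Hdv s F kk c P M hc hP.
have fE : forall a, f a = p@_a + E a /\ (E a = 0 \/ M < valr v r (E a) a).
  by move=> a; rewrite hf; exact: hpE.
have pf : forall a, f a != 0 -> valr v r (f a) a <= M -> p@_a != 0 /\ v p@_a = v (f a).
  move=> a fa0 le1; have [e1 e2] := fE a.
  have -> : p@_a = f a + - E a by rewrite e1 addrK.
  apply: (vD_strict K v Hdv) => //.
  case: e2 => [->|e2]; first by left; rewrite oppr0.
  right; rewrite vN //; have := le_lt_trans le1 e2; rewrite /valr.
  by rewrite ltrD2r ltr_int.
have fp : forall a, p@_a != 0 -> valr v r p@_a a <= M -> f a != 0 /\ v (f a) = v p@_a.
  move=> a pa0 le1; have [e1 e2] := fE a.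
  rewrite e1; apply: (vD_strict K v Hdv) => //.
  case: e2 => [->|e2]; first by left.
  right; have := le_lt_trans le1 e2; rewrite /valr.
  by rewrite ltrD2r ltr_int.
have [pa1 vpa1] := pf a1 fa1 (lexx _).
have a1p : a1 \in msupp p by rewrite mcoeff_msupp.
have [a0 a0p hmax] := seq_max K v n r le Hle (fun a => p@_a) (msupp p) a1 a1p.
have pa0 : p@_a0 != 0 by rewrite -mcoeff_msupp.
have va0 : valr v r p@_a0 a0 <= M.
  have [e|ne] := eqVneq a1 a0.
    by rewrite -e /M /valr vpa1.
  have := tlt_valr_le K v n r le _ _ _ _ (hmax a1 a1p (elimN eqP ne)).
  by rewrite /M /valr vpa1.
have [fa0 vfa0] := fp a0 pa0 va0.
have fLM : is_LM (tlt_rm v r le) f a0.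
  split => // b fb0 ba0.
  case: (lerP (valr v r (f b) b) M) => hb.
    have [pb0 vpb] := pf b fb0 hb.
    have bp : b \in msupp p by rewrite mcoeff_msupp.
    exact: tlt_val K v n r le _ _ _ _ _ _ vpb (esym vfa0) (hmax b bp ba0).
  left; apply: le_lt_trans hb.
  by move: va0; rewrite /valr vfa0.
have [q pq] := pI.
pose D := (\sum_(j < s) (msize (q j) + msize (F j)))%N.
have Dge : forall j, (msize (q j) + msize (F j) <= D)%N.
  by move=> j; rewrite /D (bigD1 j) //= leq_addr.
pose Q j := homd n K (D - (msize (F j)).-1) (q j).
pose H := \sum_(j < s) Q j * homogenize (F j).
have HH : H \is D.-homog.
  rewrite /H; apply: rpred_sum => j _.
  have -> : D = ((D - (msize (F j)).-1) + (msize (F j)).-1)%N.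
    by have := Dge j; lia.
  apply: dhomogM.
    by apply: hom_homog; have := Dge j; lia.
  by rewrite homogenizeE; apply: hom_homog; lia.
have dH : dehomogenize H = p.
  rewrite /H dehom_sum pq; apply: eq_bigr => j _.
  by rewrite dehomM homogenizeE !dehom_hom.
have HJ : poly_ideal (fun j => homogenize (F j)) H by exists Q.
pose A0 := hmon a0 (D - mdeg a0).
have HA0 : H@_A0 = p@_a0 by rewrite -dH (dehom_coef _ _ _ _ a0 HH).
have Hcoef : forall b, H@_(hmon b (D - mdeg b)) = p@_b.
  by move=> b; rewrite -dH (dehom_coef _ _ _ _ b HH).
have Htate : tate_ideal v (r0 r) (poly_ideal (fun j => homogenize (F j))) (ser_of H).
  exists 1%N, (fun _ => ser_of 1), (fun _ => H); split => //.
    by move=> _; apply: in_tate_ser.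
  apply: functional_extensionality => a.
  by rewrite big_ord1 mul_ser_poly1.
have Hnz : ser_of H <> (fun _ => 0).
  move=> e; have := congr1 (fun g => g A0) e; rewrite /ser_of /= HA0 => /eqP.
  by rewrite (negPf pa0).
have [i [A [B [LMA LMB lBA]]]] := HGB2 _ Htate Hnz.
have eA : mproj A = a0.
  case: LMA; rewrite /ser_of => HA LMA.
  have As : A \in msupp H by rewrite mcoeff_msupp.
  have [dA eA] := homog_supp _ _ _ _ _ HH As.
  set b := mproj A in eA *.
  have HAb : H@_A = p@_b by rewrite {1}eA Hcoef.
  case: (eqVneq b a0) => [//|/eqP ne]; exfalso.
  have A0A : A0 <> A by move=> e; apply: ne; rewrite /b -e /A0 mproj_hmon.
  have := LMA A0; rewrite HA0 => /(_ pa0 A0A).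
  have A0s : A0 \in msupp H by rewrite mcoeff_msupp HA0.
  have dA0 : mdeg A0 = D by have [] := homog_supp _ _ _ _ _ HH A0s.
  move/(tlt_conv K v n r le); rewrite dA0 dA => /(_ erefl).
  rewrite /A0 mproj_hmon -/b HAb => h1.
  have pb0 : p@_b != 0 by rewrite -HAb.
  have bp : b \in msupp p by rewrite mcoeff_msupp.
  have h2 := hmax b bp ne.
  exact: tlt_irr K v n r le (p@_b) b (tlt_trans K v n r le Hle _ _ _ _ _ _ h2 h1).
have [d hd] := Hhom i.
exists i, a0, (mproj B); split => //.
  case: LMB; rewrite /ser_of => hB LMB.
  have Bs : B \in msupp (h i) by rewrite mcoeff_msupp.
  have [dB eB] := homog_supp _ _ _ _ _ hd Bs.
  split; first by rewrite (dehom_coef _ _ _ _ _ hd) -eB.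
  move=> b; rewrite !(dehom_coef _ _ _ _ _ hd) -eB => hb0 ne.
  have ne' : hmon b (d - mdeg b) <> B by move=> e; apply: ne; rewrite -e mproj_hmon.
  have := LMB _ hb0 ne'.
  have bs : hmon b (d - mdeg b) \in msupp (h i) by rewrite mcoeff_msupp.
  have [db _] := homog_supp _ _ _ _ _ hd bs.
  move/(tlt_conv K v n r le); rewrite db dB => /(_ erefl).
  by rewrite mproj_hmon.
by rewrite -eA; apply: lem_mproj.
Qed.
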